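(* Assume $d\ge2$. Then $a^*_{d-2}+a^*_{d-1}=a^*_{d-1}+a^*_d$ if and only if $r=s$.
   Context: Fix an integer $d\ge0$ and $r,s\in(-1,\infty)$. Write $(x)_i=x(x+1)\cdots(x+i-1)$, $(x)_0=1$. For $0\le i\le d$ put $\theta^*_i=i$. Put $b^*_i=\frac{(d-i)(i-d-s)(2d-2i+r+s+2)_i}{(2d-2i+r+s)_{i+1}}$ ($0\le i\le d-1$), $c^*_i=\frac{i(i-d-r-1)(d-i+r+s+1)_{d-i}}{(d-i+r+s+2)_{d-i+1}}$ ($1\le i\le d$), $b^*_d=c^*_0=0$, and $a^*_i=\theta^*_0-b^*_i-c^*_i$ for $0\le i\le d$. *)

(* Defs.v *)
From mathcomp Require Import all_boot all_order all_algebra.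
Set Implicit Arguments. Unset Strict Implicit. Unset Printing Implicit Defensive.
Import Order.TTheory GRing.Theory Num.Theory.
Local Open Scope ring_scope.

Definition poch {R : pzRingType} (x : R) (i : nat) : R :=
  \prod_(k < i) (x + k%:R).

Definition thetas {R : pzRingType} (i : nat) : R := i%:R.

Definition bs {R : fieldType} (d : nat) (r s : R) (i : nat) : R :=
  if i == d then 0 else
  (d%:R - i%:R) * (i%:R - d%:R - s)
  * poch (2 * d%:R - 2 * i%:R + r + s + 2) i
  / poch (2 * d%:R - 2 * i%:R + r + s) i.+1.

Definition cs {R : fieldType} (d : nat) (r s : R) (i : nat) : R :=
  if i == 0%N then 0 else
  i%:R * (i%:R - d%:R - r - 1)
  * poch (d%:R - i%:R + r + s + 1) (d - i)
  / poch (d%:R - i%:R + r + s + 2) (d - i).+1.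

Definition as_ {R : fieldType} (d : nat) (r s : R) (i : nat) : R :=
  thetas 0 - bs d r s i - cs d r s i.

(* Main.v *)
Require Import Defs.
From mathcomp Require Import all_boot all_order all_algebra.
From mathcomp Require Import ring lra zify.
Import Order.TTheory GRing.Theory Num.Theory.
Local Open Scope ring_scope.

Lemma pochSr (R : pzRingType) (y : R) n : poch y n.+1 = poch y n * (y + n%:R).
Proof. by rewrite /poch big_ord_recr. Qed.

Lemma poch0 (R : pzRingType) (y : R) : poch y 0 = 1.
Proof. by rewrite /poch big_ord0. Qed.

Lemma pochS2 (R : comPzRingType) (y : R) n : poch y n.+2 = y*(y+1)*poch (y+2) n.
Proof.
rewrite /poch !big_ord_recl /= addr0 mulrA; congr (_ * _).
apply: eq_bigr => i _; rewrite /bump /= !add1n -addn2 natrD; ring.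
Qed.

Lemma poch_gt0 (R : realFieldType) (y : R) n : 0 < y -> 0 < poch y n.
Proof.
move=> hy; rewrite /poch; apply: prodr_gt0 => i _ /=.
have := ler0n R i; lra.
Qed.

Lemma poch_ratio (R : realFieldType) (y : R) n : 0 < y ->
  poch (y + 2) n / poch y n.+1 = (y + n%:R + 1) / (y * (y + 1)).
Proof.
move=> hy.
have h1 := @poch_gt0 R y n.+1 hy.
have E : poch y n.+2 = poch y n.+1 * (y + n%:R + 1).
  by rewrite pochSr; congr (_ * _); rewrite -addn1 natrD addrA.
rewrite pochS2 in E.
have hy0 : y != 0 by lra.
have hy1 : y + 1 != 0 by lra.
have hp : poch y n.+1 != 0 by lra.
have -> : poch (y + 2) n = poch y n.+1 * (y + n%:R + 1) / (y * (y + 1)).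
  by rewrite -E; field; apply/andP.
by field; rewrite hp hy0 hy1.
Qed.

Theorem lemma2p8 (R : realFieldType) (d : nat) (r s : R)
  (hd : (2 <= d)%N) (hr : -1 < r) (hs : -1 < s) :
  as_ d r s (d - 2) + as_ d r s (d - 1) = as_ d r s (d - 1) + as_ d r s d
  <-> r = s.
Proof.
have [n ->] : exists n, d = n.+2 by exists (d - 2)%N; lia.
have -> : (n.+2 - 2 = n)%N by lia.
suff H : as_ n.+2 r s n = as_ n.+2 r s n.+2 <-> r = s.
  split=> [h|h]; first by apply/H; rewrite addrC in h; exact: addrI h.
  by rewrite (H.2 h) addrC.
have An : as_ n.+2 r s n = 2*(s+2)*(r+s+n%:R+5)/((r+s+4)*(r+s+5))
   + n%:R*(r+3)*(r+s+3)/((r+s+5)*(r+s+6)).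
  rewrite /as_ /bs /cs /thetas.
  have -> : (n == n.+2) = false by lia.
  have -> : (n.+2 - n = 2)%N by lia.
  set y := 2 * n.+2%:R - 2 * n%:R + r + s.
  have hy : y = r + s + 4 by rewrite /y -addn2 natrD; ring.
  rewrite -mulrA poch_ratio; last by rewrite hy; lra.
  rewrite hy !pochSr !poch0 !mul1r.
  have h0 : 0 <= n%:R :> R by apply: ler0n.
  case: eqP => [->|_].
    by rewrite /=; field; repeat (apply/andP; split); apply/eqP => ?; lra.
  rewrite -addn2 natrD. clear hy y. set m := n%:R. by field; repeat (apply/andP; split); apply/eqP => ?; lra.
have Ad : as_ n.+2 r s n.+2 = (n%:R + 2) * (r + 1) / (r + s + 2).
  rewrite /as_ /bs /cs /thetas eqxx /= subnn !poch0 pochSr poch0 -addn2 natrD.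
  by field; apply/eqP => ?; lra.
rewrite An Ad.
have h0 : 0 <= n%:R :> R by apply: ler0n.
set m := n%:R.
have hn0 : r + s + 2 != 0 by apply/eqP => ?; lra.
have hn4 : r + s + 4 != 0 by apply/eqP => ?; lra.
have hn5 : r + s + 5 != 0 by apply/eqP => ?; lra.
have hn6 : r + s + 6 != 0 by apply/eqP => ?; lra.
have K : 2 * (s + 2) * (r + s + m + 5) / ((r + s + 4) * (r + s + 5)) +
   m * (r + 3) * (r + s + 3) / ((r + s + 5) * (r + s + 6)) - (m + 2) * (r + 1) / (r + s + 2)
   = - 2 * (r - s) * (r + s + 3) * (2 * (m + 2) + r + s + 2) / ((r + s + 2) * (r + s + 4) * (r + s + 6)).
  by field; rewrite hn0 hn4 hn5 hn6.
split => [E|rs]; last by apply/eqP; rewrite -subr_eq0 K rs subrr mulr0 !mul0r.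
move: K; rewrite E subrr => /esym/eqP.
rewrite mulf_eq0 invr_eq0 !mulf_eq0 -!orbA.
have -> : (r + s + 2 == 0) = false by apply/negbTE.
have -> : (r + s + 4 == 0) = false by apply/negbTE.
have -> : (r + s + 6 == 0) = false by apply/negbTE.
have -> : (r + s + 3 == 0) = false by apply/negbTE/eqP => ?; lra.
have -> : (2 * (m + 2) + r + s + 2 == 0) = false by apply/negbTE/eqP => ?; lra.
have -> : (- 2 == 0 :> R) = false by apply/negbTE/eqP => ?; lra.
rewrite !orbF subr_eq0 => /eqP //.
Qed.
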